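(* Let $\mathcal N$ be an irreducible SDAN and let $n\neq n_f$ be an atom of $\mathcal N$ with more than one outcome. Then every agent of $A$ is a party of $n$.
   Context: Fix a finite nonempty set $A$ of agents; each $a\in A$ has a nonempty set $Q_a$ of internal states, $Q_A=\prod_{a\in A}Q_a$. A transformer is a left-total relation on $Q_A$; for $S\subseteq A$ an $S$-transformer is one with $(q,q')\in\tau\Rightarrow q_a=q'_a$ for all $a\notin S$. An atom is $n=(P_n,R_n,\delta_n)$: $P_n\subseteq A$ nonempty (parties), $R_n$ finite nonempty (outcomes), $\delta_n$ assigns to each $r\in R_n$ a $P_n$-transformer $\langle n,r\rangle$. A negotiation is $\mathcal N=(N,n_0,n_f,\mathcal X)$ with $N$ a finite set of atoms, $n_0,n_f\in N$ (possibly equal), $T(N)=\{(n,a,r): n\in N,a\in P_n,r\in R_n\}$, $\mathcal X:T(N)\to 2^N$, such that every agent is a party of $n_0$ and of $n_f$, and $\mathcal X(n,a,r)=\emptyset$ iff $n=n_f$. Its graph has vertices $N$ and edges $(n,n')$ whenever $n'\in\mathcal X(n,a,r)$ for some $(n,a,r)$; $\mathcal N$ is acyclic if the graph has no cycle. A marking is $x:A\to 2^N$; initial $x_0(a)=\{n_0\}$, final $x_f(a)=\emptyset$. $x$ enables $n$ if $n\in x(a)$ for all $a\in P_n$; then for $r\in R_n$ the step $(n,r)$ leads to $x'$ with $x'(a)=\mathcal X(n,a,r)$ for $a\in P_n$, $x'(a)=x(a)$ otherwise. A large step is a finite occurrence sequence from $x_0$ to $x_f$. $\mathcal N$ is sound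 if every atom is enabled at some reachable marking and every occurrence sequence from $x_0$ is a large step or can be extended to one. An agent $a$ is deterministic if for each $(n,a,r)\in T(N)$ with $n\ne n_f$, $\mathcal X(n,a,r)$ is a singleton; $\mathcal N$ is deterministic if all agents are deterministic. An SDAN is a sound, deterministic, acyclic negotiation. Merge rule. Guard: some atom $n$ has distinct outcomes $r_1,r_2$ with $\mathcal X(n,a,r_1)=\mathcal X(n,a,r_2)$ for all $a\in P_n$. Action: replace $r_1,r_2$ in $R_n$ by a fresh outcome $r_f$ with $\mathcal X(n,a,r_f)=\mathcal X(n,a,r_1)$ for $a\in P_n$ and $\langle n,r_f\rangle=\langle n,r_1\rangle\cup\langle n,r_2\rangle$. $(n,r)$ unconditionally enables $n'$ if $P_n\supseteq P_{n'}$ and $\mathcal X(n,a,r)=\{n'\}$ for all $a\in P_{n'}$. d-shortcut rule. Guard: atoms $n\neq n'$ and $r\in R_n$ such that $(n,r)$ unconditionally enables $n'$; $n'$ has at most one outcome; and if $n'\in\mathcal X(\tilde n,\tilde a,\tilde r)$ for at least one $(\tilde n,\tilde a,\tilde r)\in T(N)$ with $\tilde n\neq n$, then $\{n'\}=\mathcal X(\tilde n,\tilde a,\tilde r)$ for some $(\tilde n,\tilde a,\tilde r)\in T(N)$ with $\tilde n\ne n$. Action: (1) replace $R_n$ by $(R_n\setminus\{r\})\cup\{r'_f:r'\in R_{n'}\}$ with fresh names; (2) for $a\in P_{n'}$ set $\mathcal X(n,a,r'_f)=\mathcal X(n',a,r')$, for $a\in P_n\setminus P_{n'}$ set $\mathcal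 X(n,a,r'_f)=\mathcal X(n,a,r)$; (3) $\langle n,r'_f\rangle=\langle n,r\rangle\langle n',r'\rangle$ (relational composition); (4) if afterwards $n'\notin\mathcal X(\tilde n,\tilde a,\tilde r)$ for all $(\tilde n,\tilde a,\tilde r)\in T(N)$, remove $n'$. An SDAN is irreducible if neither the merge rule nor the d-shortcut rule can be applied to it. *)

(* Defs.v *)
From mathcomp Require Import all_boot.
Set Implicit Arguments.
Unset Strict Implicit.
Unset Printing Implicit Defensive.

Definition gstate (Ag : finType) (Q : Ag -> Type) := forall a : Ag, Q a.

Record negotiation (Ag : finType) (Q : Ag -> Type) := Negotiation {
  atom : finType;
  parties : atom -> {set Ag};
  outcome : atom -> finType;
  trans : forall n, outcome n -> (forall a : Ag, Q a) -> (forall a : Ag, Q a) -> Prop;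
  nxt : forall n, Ag -> outcome n -> {set atom};    (* X(n,a,r), used for a in P_n *)
  n0 : atom;
  nf : atom
}.
Arguments negotiation : clear implicits.
Arguments atom {Ag Q} _.
Arguments parties {Ag Q} _ _.
Arguments outcome {Ag Q} _ _.
Arguments trans {Ag Q} _ {n} _ _ _.
Arguments nxt {Ag Q} _ _ _ _.
Arguments n0 {Ag Q} _.
Arguments nf {Ag Q} _.

Section Negotiations.
Variables (Ag : finType) (Q : Ag -> Type) (Ng : negotiation Ag Q).

Local Notation N := (atom Ng).
Local Notation P := (parties Ng).
Local Notation R := (outcome Ng).
Local Notation X := (nxt Ng).

Definition transformer_for (S : {set Ag}) (tau : (forall a : Ag, Q a) -> (forall a : Ag, Q a) -> Prop) :=
  (forall q, exists q', tau q q') /\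
  (forall q q', tau q q' -> forall a, a \notin S -> q a = q' a).

Definition is_negotiation : Prop :=
  0 < #|Ag| /\
  (forall a, inhabited (Q a)) /\
  (forall n : N, P n != set0) /\
  (forall n : N, 0 < #|R n|) /\
  (forall (n : N) (r : R n), transformer_for (P n) (trans Ng r)) /\
  P (n0 Ng) = [set: Ag] /\ P (nf Ng) = [set: Ag] /\
  (forall (n : N) a (r : R n), a \in P n -> (X n a r == set0) = (n == nf Ng)).

Definition edge : rel N :=
  fun n n' => [exists a in P n, exists r : R n, n' \in X n a r].

Definition acyclic : Prop :=
  forall n n' : N, edge n n' -> ~~ connect edge n' n.

Definition deterministic : Prop :=
  forall (n : N) a (r : R n), n != nf Ng -> a \in P n -> #|X n a r| = 1%N.

Definition marking := {ffun Ag -> {set N}}.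
Definition init_marking : marking := [ffun _ => [set n0 Ng]].
Definition final_marking : marking := [ffun _ => set0].

Definition enabled (x : marking) (n : N) := [forall a in P n, n \in x a].

Definition fire (x : marking) (n : N) (r : R n) : marking :=
  [ffun a => if a \in P n then X n a r else x a].

Definition step_t := {n : N & R n}.

(* [run x s = Some y] iff the sequence of steps [s] is an occurrence
   sequence from [x] leading to [y] *)
Fixpoint run (x : marking) (s : seq step_t) : option marking :=
  match s with
  | [::] => Some x
  | st :: s' => if enabled x (tag st) then run (fire x (tagged st)) s' else None
  end.

Definition reachable (x : marking) := exists s, run init_marking s = Some x.

Definition sound : Prop :=
  (forall n : N, exists x, reachable x /\ enabled x n) /\
  (forall s x, run init_marking s = Some x ->
     exists s', run x s' = Some final_marking).

Definition SDAN : Prop := sound /\ deterministic /\ acyclic.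

Definition merge_applicable : Prop :=
  exists (n : N) (r1 r2 : R n), r1 != r2 /\
    forall a, a \in P n -> X n a r1 = X n a r2.

Definition uncond_enables (n : N) (r : R n) (n' : N) : Prop :=
  P n' \subset P n /\ forall a, a \in P n' -> X n a r = [set n'].

Definition dshortcut_applicable : Prop :=
  exists (n n' : N) (r : R n),
    n != n' /\ uncond_enables r n' /\ #|R n'| <= 1 /\
    ((exists (nt : N) (at_ : Ag) (rt : R nt),
        [/\ at_ \in P nt, nt != n & n' \in X nt at_ rt]) ->
     exists (nt : N) (at_ : Ag) (rt : R nt),
        [/\ at_ \in P nt, nt != n & X nt at_ rt = [set n']]).

Definition irreducible : Prop := ~ merge_applicable /\ ~ dshortcut_applicable.

End Negotiations.

(* Main.v *)
Require Import Defs.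
From mathcomp Require Import all_boot zify.
Set Implicit Arguments.
Unset Strict Implicit.
Unset Printing Implicit Defensive.

Section Proof.
Variables (Ag : finType) (Q : Ag -> Type) (Ng : negotiation Ag Q).
Local Notation N := (atom Ng).
Local Notation P := (parties Ng).
Local Notation R := (outcome Ng).
Local Notation X := (nxt Ng).
Local Notation nf := (nf Ng).
Local Notation edge := (@Defs.edge _ _ Ng).

Hypothesis Hneg : is_negotiation Ng.
Hypothesis Hdet : deterministic Ng.
Hypothesis Hacyc : acyclic Ng.

Definition full (k : N) := P k == setT.

Lemma Pnf : P nf = setT.
Proof. by case: Hneg => _ [_ [_ [_ [_ [_ [H _]]]]]]. Qed.

Lemma Pne k : exists a, a \in P k.
Proof.
case: Hneg => _ [_ [H _]]. have := H k. rewrite -card_gt0 => /card_gt0P [a Ha]. by exists a.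
Qed.

Lemma Rne k : exists r : R k, true.
Proof.
case: Hneg => _ [_ [_ [H _]]]. have := H k. case/card_gt0P => r _. by exists r.
Qed.

Lemma Xnf a (r : R nf) : X nf a r = set0.
Proof.
case: Hneg => _ [_ [_ [_ [_ [_ [_ H]]]]]]. have := H nf a r. rewrite Pnf inE eqxx.
by move/(_ isT)/eqP.
Qed.

Lemma Xsing k a (r : R k) : k != nf -> a \in P k -> exists s, X k a r = [set s].
Proof. move=> H1 H2. apply/cards1P. by rewrite Hdet. Qed.

Lemma full_nf k : ~~ full k -> k != nf.
Proof. apply: contra => /eqP ->. by rewrite /full Pnf. Qed.

Lemma edgeI k a (r : R k) s : a \in P k -> s \in X k a r -> edge k s.
Proof. move=> Ha Hs. apply/existsP; exists a; rewrite Ha /=. apply/existsP; by exists r. Qed.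

Lemma edgeE k s : edge k s -> exists a (r : R k), a \in P k /\ s \in X k a r.
Proof. case/existsP=> a /andP [Ha /existsP [r Hr]]. by exists a, r. Qed.

Lemma conn_antisym u v : connect edge u v -> connect edge v u -> u = v.
Proof.
case/connectP => [[|z p]] /=; first by move=> _ ->.
case/andP => Huz Hp -> Hvu.
have Hzu : connect edge z u.
  apply: connect_trans Hvu. apply/connectP; by exists p.
by move: (Hacyc Huz); rewrite Hzu.
Qed.

Lemma no_self k : ~~ edge k k.
Proof. apply/negP => H. by move: (Hacyc H); rewrite connect0. Qed.

Lemma conn_first (e : rel N) u v : connect e u v -> u = v \/ exists2 z, e u z & connect e z v.
Proof.
case/connectP => [[|z p]] /=; first by left.
case/andP => Huz Hp ->; right; exists z => //. apply/connectP; by exists p.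
Qed.

Lemma conn_last (e : rel N) u v : connect e u v -> u = v \/ exists2 z, connect e u z & e z v.
Proof.
case/connectP => p; case/lastP: p => [|p z] /=; first by move=> _ ->; left.
rewrite rcons_path last_rcons => /andP [Hp Hz] ->; right; exists (last u p) => //.
apply/connectP; by exists p.
Qed.

Definition h (k : N) := #|[set k' | connect edge k k']|.
Definition anc (k : N) := #|[set k' | connect edge k' k]|.

Lemma h_edge k s : edge k s -> h s < h k.
Proof.
move=> Hks. apply: proper_card. apply/properP; split.
  apply/subsetP => z; rewrite !inE => Hz. by apply: connect_trans (connect1 Hks) Hz.
exists k; rewrite !inE ?connect0 //. exact: Hacyc.
Qed.

Lemma h_conn k s : connect edge k s -> h s <= h k.
Proof.
move=> Hks. apply: subset_leq_card. apply/subsetP => z; rewrite !inE => Hz.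
exact: connect_trans Hks Hz.
Qed.

Lemma anc_edge k s : edge k s -> anc k < anc s.
Proof.
move=> Hks. apply: proper_card. apply/properP; split.
  apply/subsetP => z; rewrite !inE => Hz. by apply: connect_trans Hz (connect1 Hks).
exists s; rewrite !inE ?connect0 //. exact: Hacyc.
Qed.

Lemma h_pos k : 0 < h k.
Proof. apply/card_gt0P; exists k; by rewrite inE connect0. Qed.


Local Notation marking := (@Defs.marking _ _ Ng).
Local Notation final := (@final_marking _ _ Ng).

Lemma fireE (x : marking) k (r : R k) a :
  fire x r a = if a \in P k then X k a r else x a.
Proof. by rewrite /fire ffunE. Qed.

Lemma run_cat (x : marking) s1 s2 :
  run x (s1 ++ s2) = if run x s1 is Some y then run y s2 else None.
Proof.
elim: s1 x => [|[k r] s1 IH] x //=. by case: (enabled x k).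
Qed.

Lemma enabledP (x : marking) k : reflect (forall a, a \in P k -> k \in x a) (enabled x k).
Proof. exact: forall_inP. Qed.

Lemma final_ne (y : marking) c k : y = final -> y c = [set k] -> False.
Proof.
move=> -> ; rewrite /final_marking ffunE => /setP /(_ k). by rewrite !inE eqxx.
Qed.

Lemma party_pos (y : marking) s c k : run y s = Some final -> y c = [set k] -> c \in P k.
Proof.
elim: s y => [|[k0 r] s IH] y /=; first by case=> Hy; move/(final_ne Hy).
case Hen: (enabled y k0) => // Hrun Hyc.
case Hc: (c \in P k0).
  move/enabledP: Hen => /(_ c Hc). by rewrite Hyc inE => /eqP <-.
apply: IH Hrun _. by rewrite fireE Hc.
Qed.

Definition stp (c : Ag) : rel N :=
  fun k s => ~~ full k && (c \in P k) && [exists r : R k, s \in X k c r].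

Lemma stp_edge c k s : stp c k s -> edge k s.
Proof. case/andP => /andP [_ Hc] /existsP [r Hr]. exact: edgeI Hc Hr. Qed.

Lemma conn_stp_edge c u v : connect (stp c) u v -> connect edge u v.
Proof. apply: connect_sub => x y /stp_edge H. exact: connect1. Qed.

Lemma from_full c u v : full u -> connect (stp c) u v -> v = u.
Proof.
move=> Hu /conn_first [-> //|[z]]. by rewrite /stp Hu.
Qed.

Lemma first_full (y : marking) s :
  run y s = Some final -> (forall c, exists k, y c = [set k]) ->
  exists2 F, full F & forall c k, y c = [set k] -> connect (stp c) k F.
Proof.
elim: s y => [|[k0 r] s IH] y /=.
  case=> Hy Hs. case: (Pne nf) => c _. case: (Hs c) => k. by move/(final_ne Hy).
case Hen: (enabled y k0) => // Hrun Hs.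
case Hfull: (full k0).
  exists k0 => // c k Hyc. move/eqP: Hfull => Hf.
  have : k0 \in y c by apply: (enabledP _ _ Hen); rewrite Hf inE.
  by rewrite Hyc inE => /eqP ->.
have Hnf : k0 != nf by apply: full_nf; rewrite Hfull.
have Hs' : forall c, exists k, fire y r c = [set k].
  move=> c; rewrite fireE; case: ifP => Hc; last exact: Hs.
  exact: Xsing.
case: (IH _ Hrun Hs') => F HF HIH; exists F => // c k Hyc.
case Hc: (c \in P k0); last by apply: HIH; rewrite fireE Hc.
have : k0 \in y c by exact: (enabledP _ _ Hen).
rewrite Hyc inE => /eqP <-.
case: (Xsing r Hnf Hc) => z Hz.
apply: connect_trans (connect1 _) (HIH c z _); last by rewrite fireE Hc.
rewrite /stp Hfull Hc /=. apply/existsP; exists r. by rewrite Hz inE.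
Qed.

Lemma leave_region (D : pred N)
  (Dcl : forall k a (r : R k) s, k \in D -> a \in P k -> s \in X k a r -> s \in D)
  (y : marking) s c k :
  run y s = Some final -> y c = [set k] -> k \notin D ->
  exists2 k', k' \notin D & enabled y k'.
Proof.
elim: s y => [|[k0 r] s IH] y /=; first by case=> Hy; move/(final_ne Hy).
case Hen: (enabled y k0) => // Hrun Hyc HkD.
case Hk0: (k0 \in D); last by exists k0; rewrite ?Hk0.
have Hc : c \notin P k0.
  apply/negP => Hc. move/enabledP: Hen => /(_ c Hc). rewrite Hyc inE => /eqP Heq.
  by rewrite -Heq Hk0 in HkD.
case: (IH _ Hrun _ HkD); first by rewrite fireE (negbTE Hc).
move=> k' Hk' /enabledP Hen'; exists k' => //; apply/enabledP => a Ha.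
have := Hen' a Ha; rewrite fireE; case: ifP => // Ha0 Hin.
by rewrite (Dcl _ _ _ _ Hk0 Ha0 Hin) in Hk'.
Qed.


Lemma pos_party (y : marking) k a ka : enabled y k -> a \in P k -> y a = [set ka] -> ka = k.
Proof. move=> /enabledP H Ha Hy. move: (H a Ha). by rewrite Hy inE => /eqP. Qed.

Lemma stp_fire k c (r : R k) z : ~~ full k -> c \in P k -> X k c r = [set z] -> stp c k z.
Proof. move=> Hf Hc Hz. rewrite /stp Hf Hc /=. apply/existsP; exists r. by rewrite Hz inE. Qed.

Lemma cons_lemma (D : pred N)
  (Dcl : forall k a (r : R k) s, k \in D -> a \in P k -> s \in X k a r -> s \in D)
  (Dfun : forall c k s1 s2, k \in D -> stp c k s1 -> stp c k s2 -> s1 = s2)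
  (y : marking) s :
  run y s = Some final -> (forall c, exists2 k, y c = [set k] & k \in D) ->
  forall k c kc, ~~ full k -> y c = [set kc] -> connect (stp c) kc k ->
  forall c' kc', c' \in P k -> y c' = [set kc'] -> connect (stp c') kc' k.
Proof.
elim: s y => [|[k0 r] s IH] y /=; first by case=> Hy Hs; case: (Pne nf) => c _; case: (Hs c) => k /(final_ne Hy).
case Hen: (enabled y k0) => // Hrun Hs k c kc Hk Hyc Hconn c' kc' Hc' Hyc'.
case Hfull: (full k0).
  have Hc : c \in P k0 by move/eqP: Hfull => ->; rewrite inE.
  rewrite (pos_party Hen Hc Hyc) in Hconn.
  have := from_full Hfull Hconn => Hkk. by rewrite Hkk Hfull in Hk.
have Hnf : k0 != nf by apply: full_nf; rewrite Hfull.
have Hs' : forall c, exists2 k, fire y r c = [set k] & k \in D.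
  move=> a; rewrite fireE; case: ifP => Ha; last exact: Hs.
  case: (Xsing r Hnf Ha) => z Hz; exists z => //.
  case: (Hs a) => ka Hya HkaD. rewrite (pos_party Hen Ha Hya) in HkaD.
  by apply: (Dcl _ _ r _ HkaD Ha); rewrite Hz inE.
have key : forall a ka, y a = [set ka] -> exists2 kb, fire y r a = [set kb] & 
     (forall v, connect (stp a) kb v -> connect (stp a) ka v).
  move=> a ka Hya; case Ha: (a \in P k0); last by exists ka => //; rewrite fireE Ha.
  case: (Xsing r Hnf Ha) => z Hz; exists z; first by rewrite fireE Ha.
  move=> v Hv; rewrite (pos_party Hen Ha Hya). apply: connect_trans Hv.
  apply: connect1; apply: stp_fire Hz => //; by rewrite Hfull.
case: (eqVneq k k0) => [Hkk0|Hkk0].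
  subst k. by rewrite (pos_party Hen Hc' Hyc') connect0.
case: (key _ _ Hyc') => kb' Hkb' Hback; apply: Hback.
have [c2 [kc2 [Hyc2 Hconn2]]] : exists c2 kc2, fire y r c2 = [set kc2] /\ connect (stp c2) kc2 k.
  case Hc: (c \in P k0); last by exists c, kc; rewrite fireE Hc.
  rewrite (pos_party Hen Hc Hyc) in Hconn.
  case: (conn_first Hconn) => [Heq|[z' Hz' Hz'k]]; first by rewrite Heq eqxx in Hkk0.
  case: (Xsing r Hnf Hc) => z Hz; exists c, z; split; first by rewrite fireE Hc.
  case: (Hs c) => kk Hykk HkkD. rewrite (pos_party Hen Hc Hykk) in HkkD.
  rewrite (Dfun c k0 z' z HkkD Hz') // in Hz'k. apply: stp_fire Hz => //; by rewrite Hfull.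
exact: (IH _ Hrun Hs' k c2 kc2 Hk Hyc2 Hconn2 c' kb' Hc' Hkb').
Qed.


Definition inv (x : marking) := (forall a, x a = set0) \/ (forall a, exists k, x a = [set k]).

Lemma run_inv (x y : marking) s : run x s = Some y -> inv x -> inv y.
Proof.
elim: s x => [|[k0 r] s IH] x /=; first by case=> ->.
case Hen: (enabled x k0) => // Hrun Hx; apply: (IH _ Hrun).
case: Hx => Hx.
  case: (Pne k0) => a Ha. move/enabledP: Hen => /(_ a Ha). by rewrite Hx inE.
case: (eqVneq k0 nf) => Hk0.
  subst k0; left => a. by rewrite fireE Pnf inE Xnf.
right => a. rewrite fireE; case: ifP => Ha; [exact: Xsing | exact: Hx].
Qed.

Lemma reach_sing (x : marking) k : reachable x -> enabled x k -> forall a, exists k', x a = [set k'].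
Proof.
case=> s Hs Hen. have : inv x.
  apply: run_inv Hs _. right => a. exists (n0 Ng). by rewrite /init_marking ffunE.
case=> // Hx. case: (Pne k) => a Ha. move/enabledP: Hen => /(_ a Ha). by rewrite Hx inE.
Qed.

Definition phi (x : marking) := \sum_(a : Ag) \sum_(m in x a) h m.

Lemma phi_fire (x : marking) k (r : R k) :
  (forall a, exists k', x a = [set k']) -> enabled x k -> phi (fire x r) < phi x.
Proof.
move=> Hs Hen.
have H1 : forall a, a \in P k -> \sum_(m in fire x r a) h m < \sum_(m in x a) h m.
  move=> a Ha. case: (Hs a) => ka Hya. have Hka := pos_party Hen Ha Hya. subst ka.
  rewrite fireE Ha Hya big_set1. case: (eqVneq k nf) => Hk.
    move: r Hen Ha Hya; rewrite Hk => r _ _ _. rewrite Xnf big_set0; exact: h_pos.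
  case: (Xsing r Hk Ha) => z Hz. rewrite Hz big_set1. apply: h_edge.
  apply: (@edgeI k a r z Ha). by rewrite Hz inE.
case: (Pne k) => a0 Ha0.
rewrite /phi (bigD1 a0) // [X in _ < X](bigD1 a0) //= -addSn.
apply: leq_add; first exact: H1.
apply: leq_sum => a _. case: (boolP (a \in P k)) => Ha; first exact: ltnW (H1 a Ha).
by rewrite fireE (negbTE Ha).
Qed.

Lemma det_full (D : pred N)
  (Dcl : forall k a (r : R k) s, k \in D -> a \in P k -> s \in X k a r -> s \in D)
  (Dfun : forall c k s1 s2, k \in D -> stp c k s1 -> stp c k s2 -> s1 = s2)
  c u F1 F2 : u \in D -> connect (stp c) u F1 -> connect (stp c) u F2 -> full F1 -> full F2 -> F1 = F2.
Proof.
move=> HuD /connectP [p Hp ->] {F1}. elim: p u HuD Hp => [|z p IH] u HuD /=.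
  move=> _ H2 Hf _. by rewrite (from_full Hf H2).
case/andP => Huz Hp H2 Hf1 Hf2.
case: (conn_first H2) => [Heq|[z' Huz' Hz'F]].
  subst u. by move: Huz; rewrite /stp Hf2.
have Hzz := Dfun _ _ _ _ HuD Huz Huz'. subst z'.
apply: IH => //. move: Huz => /andP [/andP [_ Hc] /existsP [r Hr]].
exact: Dcl HuD Hc Hr.
Qed.


Hypothesis Hsound : sound Ng.
Hypothesis Hirr : irreducible Ng.

Definition cex (k : N) := [&& k != nf, 1 < #|R k| & P k != setT].

Lemma max_cex m : cex m -> exists n, cex n /\ forall k, connect edge n k -> k != n -> ~~ cex k.
Proof.
suff H : forall N0 m, h m <= N0 -> cex m -> exists n, cex n /\ forall k, connect edge n k -> k != n -> ~~ cex k.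
  exact: H (leqnn _).
elim=> [|N0 IH] {}m Hm Hc; first by move: (h_pos m); rewrite ltnNge Hm.
case: (pickP (fun k => [&& connect edge m k, k != m & cex k])) => [k /and3P [Hmk Hkm Hck]|Hnone].
  apply: (IH k) => //. case: (conn_first Hmk) => [Heq|[z Hz Hzk]]; first by rewrite Heq eqxx in Hkm.
  have := h_edge Hz; have := h_conn Hzk. lia.
exists m; split => // k Hmk Hkm. by move: (Hnone k); rewrite Hmk Hkm /= => ->.
Qed.

Lemma card_le1_eq (T : finType) (x y : T) : #|T| <= 1 -> x = y.
Proof. move/card_le1_eqP => H; symmetry; exact: H. Qed.

Lemma main_contra m : m != nf -> 1 < #|R m| -> P m != setT -> False.
Proof.
move=> H1 H2 H3.
case: (max_cex (m:=m)); first by rewrite /cex H1 H2 H3.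
move=> n [/and3P [Hnf Hn2 Hnfull] Hmax].
pose C := [pred k | connect edge n k && (k != n)].
have Dcl : forall k a (r : R k) s, k \in C -> a \in P k -> s \in X k a r -> s \in C.
  move=> k a r s /andP [Hnk Hkn] Ha Hs. have Hks := edgeI Ha Hs.
  rewrite inE (connect_trans Hnk (connect1 Hks)) /=.
  apply/eqP => Hsn. subst s. by move: (Hacyc Hks); rewrite Hnk.
have Dfun : forall c k s1 s2, k \in C -> stp c k s1 -> stp c k s2 -> s1 = s2.
  move=> c k s1 s2 /andP [Hnk Hkn] /andP [/andP [Hf Hc] /existsP [r1 Hr1]] /andP [_ /existsP [r2 Hr2]].
  have Hk1 : #|R k| <= 1.
    have := Hmax k Hnk Hkn. rewrite /cex (full_nf Hf) /=. move: (Hf); rewrite /full => ->.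
    by rewrite andbT -leqNgt.
  rewrite (card_le1_eq r2 r1 Hk1) in Hr2.
  case: (Xsing r1 (full_nf Hf) Hc) => z Hz. move: Hr1 Hr2; rewrite Hz !inE => /eqP -> /eqP ->. done.
have C1 : forall k, k \in C -> ~~ full k -> #|R k| <= 1.
  move=> k /andP [Hnk Hkn] Hf.
  have := Hmax k Hnk Hkn. rewrite /cex (full_nf Hf) /=. move: (Hf); rewrite /full => ->.
  by rewrite andbT -leqNgt.
have P2 : forall (r : R n) k, P k \subset P n -> (forall g, g \in P k -> X n g r = [set k]) -> False.
  move=> r k Hsub Hall. case: Hirr => _; apply.
  have Hnk : edge n k.
    case: (Pne k) => g Hg. apply: (@edgeI n g r k (subsetP Hsub g Hg)). by rewrite Hall // inE.
  have Hkn : k != n by apply/eqP => Heq; subst k; move: (no_self n); rewrite Hnk.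
  have Hkf : ~~ full k.
    apply/negP => /eqP Hk. move/negP: Hnfull; apply. by rewrite eqEsubset subsetT /= -Hk.
  exists n, k, r; split; first by rewrite eq_sym.
  split; first by split.
  split; first by apply: C1 Hkf; rewrite inE connect1 // Hkn.
  move=> [nt [at_ [rt [Hat Hnt Hin]]]]; exists nt, at_, rt; split => //.
  case: (eqVneq nt nf) => Hntf.
    move: rt Hin; rewrite Hntf => rt; by rewrite Xnf inE.
  case: (Xsing rt Hntf Hat) => z Hz. move: Hin; rewrite Hz inE => /eqP ->. done.
have reach_fire : forall (x : marking) k (r : R k), reachable x -> enabled x k -> reachable (fire x r).
  move=> x k r [s Hs] Hek. exists (s ++ [:: existT _ k r]). by rewrite run_cat Hs /= Hek.
have xstar : exists x, [/\ reachable x, enabled x n & forall k, [forall a in P k, a \notin P n] -> ~~ enabled x k].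
  case: Hsound => Hs1 _. case: (Hs1 n) => x0 [Hr0 He0].
  suff H : forall N0 x, phi x <= N0 -> reachable x -> enabled x n -> exists x, [/\ reachable x, enabled x n & forall k, [forall a in P k, a \notin P n] -> ~~ enabled x k].
    exact: H _ _ (leqnn _) Hr0 He0.
  elim=> [|N0 IH] x Hx Hr He;
   (case: (pickP (fun k => [forall a in P k, a \notin P n] && enabled x k)) => [k /andP [Hdisj Hek] | Hnone];
    last by exists x; split => // k Hk; move: (Hnone k); rewrite Hk /= => ->);
   case: (Rne k) => r _;
   have Hlt := phi_fire r (reach_sing Hr He) Hek.
    by move: Hx; rewrite leqn0 => /eqP Hx; rewrite Hx in Hlt.
  apply: (IH (fire x r)); first by rewrite -ltnS; apply: leq_trans Hlt Hx.
    exact: reach_fire.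
  apply/enabledP => a Ha; rewrite fireE; case: ifP => Hak.
    by move/forall_inP: Hdisj => /(_ a Hak); rewrite Ha.
  exact: (enabledP _ _ He).
have succC : forall a (r : R n) z, a \in P n -> z \in X n a r -> z \in C.
  move=> a r z Ha Hz. have Hnz := edgeI Ha Hz. rewrite inE connect1 //=.
  by apply/eqP => Heq; subst z; move: (no_self n); rewrite Hnz.
case: xstar => xs [Hxr Hxe Hxst].
have Hxs := reach_sing Hxr Hxe.
pose y (r : R n) := fire xs r.
have Hy_compl : forall r, exists s, run (y r) s = Some final.
  move=> r. case: Hsound => _ Hs2. case: (reach_fire _ _ r Hxr Hxe) => s Hs. exact: Hs2 Hs.
have Hy_pos : forall r c, exists2 k, y r c = [set k] & k \in C.
  move=> r c. rewrite /y fireE. case: ifP => Hc.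
    case: (Xsing r Hnf Hc) => z Hz; exists z => //. apply: (succC c r) => //. by rewrite Hz inE.
  case: (Hxs c) => k Hk; exists k => //. apply/negPn/negP => HkC.
  case: (Hy_compl r) => s Hs.
  case: (leave_region Dcl Hs (c:=c) _ HkC); first by rewrite /y fireE Hc.
  move=> k' Hk'C /enabledP Hek'.
  have Hdisj : [forall a in P k', a \notin P n].
    apply/forall_inP => a Ha; apply/negP => Han. move: (Hek' a Ha); rewrite /y fireE Han => Hin.
    by rewrite (succC a r k' Han Hin) in Hk'C.
  move: (Hxst k' Hdisj) => /negP; apply; apply/enabledP => a Ha.
  move: (Hek' a Ha); rewrite /y fireE. by move/forall_inP: Hdisj => /(_ a Ha) /negbTE ->.
pose S (r : R n) k := ~~ full k /\ exists c kc, y r c = [set kc] /\ connect (stp c) kc k.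
have Cons : forall (r : R n) k c kc, ~~ full k -> y r c = [set kc] -> connect (stp c) kc k ->
    forall c' kc', c' \in P k -> y r c' = [set kc'] -> connect (stp c') kc' k.
  move=> r; case: (Hy_compl r) => s Hs. exact: (cons_lemma Dcl Dfun Hs (Hy_pos r)).
have incl : forall (r r' : R n) k, S r k -> S r' k.
  move=> r r'.
  suff H : forall N0 k, anc k <= N0 -> S r k -> S r' k by move=> k; exact: H _ k (leqnn _).
  elim=> [|N0 IH] k Hk [Hkf [c [kc [Hyc Hconn]]]].
    have : 0 < anc k by apply/card_gt0P; exists k; rewrite inE connect0.
    by rewrite ltnNge Hk.
  case Hsub: (P k \subset P n).
    case: (pickP (fun g => (g \in P k) && (y r g != [set k]))) => [g /andP [Hg Hne] | Hall].
      case: (Hy_pos r g) => kg Hyg _. have Hcg := Cons r k c kc Hkf Hyc Hconn g kg Hg Hyg.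
      case: (conn_last Hcg) => [Heq | [k' Hk'1 Hk'2]]; first by rewrite Hyg Heq eqxx in Hne.
      have Hk'f : ~~ full k' by case/andP: Hk'2 => /andP [].
      have Hgk' : g \in P k' by case/andP: Hk'2 => /andP [].
      have Hlt := anc_edge (stp_edge Hk'2).
      have HS' : S r' k'.
        apply: IH; first by rewrite -ltnS; apply: leq_trans Hlt Hk.
        split => //; by exists g, kg.
      case: HS' => _ [c2 [kc2 [Hyc2 Hconn2]]].
      case: (Hy_pos r' g) => kg2 Hyg2 _.
      have H := Cons r' k' c2 kc2 Hk'f Hyc2 Hconn2 g kg2 Hgk' Hyg2.
      split => //; exists g, kg2; split => //; exact: connect_trans H (connect1 Hk'2).
    exfalso. apply: (P2 r k Hsub) => g Hg. move: (Hall g); rewrite Hg /= => /negbFE /eqP.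
    by rewrite /y fireE (subsetP Hsub g Hg).
  case/subsetPn: (negbT Hsub) => b Hb Hbn. case: (Hy_pos r b) => kb Hyb _.
  have H := Cons r k c kc Hkf Hyc Hconn b kb Hb Hyb.
  split => //; exists b, kb; split => //. move: Hyb; by rewrite /y !fireE (negbTE Hbn).
have Hsing : forall r c, exists k, y r c = [set k].
  move=> r c; case: (Hy_pos r c) => k Hk _; by exists k.
have [b Hbn] : exists b, b \notin P n.
  case: (pickP (fun b => b \notin P n)) => [b Hb | Hnone]; first by exists b.
  exfalso; move/negP: Hnfull; apply; apply/eqP/setP => a; rewrite inE.
  by move: (Hnone a) => /negbFE.
case/card_gt1P: Hn2 => r1 [r2 [_ _ Hr12]].
case: (Hy_compl r1) => s1 Hs1. case: (Hy_compl r2) => s2 Hs2.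
case: (first_full Hs1 (Hsing r1)) => F1 HF1 HF1c.
case: (first_full Hs2 (Hsing r2)) => F2 HF2 HF2c.
have HF : F1 = F2.
  case: (Hy_pos r1 b) => kb Hyb HkbC.
  have Hyb2 : y r2 b = [set kb] by move: Hyb; rewrite /y !fireE (negbTE Hbn).
  exact: (det_full Dcl Dfun HkbC (HF1c b kb Hyb) (HF2c b kb Hyb2) HF1 HF2).
case: Hirr => Hnm _. apply: Hnm. exists n, r1, r2; split => // g Hg.
case: (Xsing r1 Hnf Hg) => f1 Hf1. case: (Xsing r2 Hnf Hg) => f2 Hf2. rewrite Hf1 Hf2; congr [set _].
have Hy1 : y r1 g = [set f1] by rewrite /y fireE Hg.
have Hy2 : y r2 g = [set f2] by rewrite /y fireE Hg.
have Hg1 := party_pos Hs1 Hy1. have Hg2 := party_pos Hs2 Hy2.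
case: (boolP (full f1)) => Hff1; case: (boolP (full f2)) => Hff2.
- by rewrite -(from_full Hff1 (HF1c g f1 Hy1)) -(from_full Hff2 (HF2c g f2 Hy2)).
- have : S r2 f2 by split => //; exists g, f2.
  move/(incl r2 r1) => [_ [c [kc [Hyc Hconn]]]].
  symmetry; exact: (from_full Hff1 (Cons r1 f2 c kc Hff2 Hyc Hconn g f1 Hg2 Hy1)).
- have : S r1 f1 by split => //; exists g, f1.
  move/(incl r1 r2) => [_ [c [kc [Hyc Hconn]]]].
  by rewrite (from_full Hff2 (Cons r2 f1 c kc Hff1 Hyc Hconn g f2 Hg1 Hy2)).
- have : S r1 f1 by split => //; exists g, f1.
  move/(incl r1 r2) => [_ [c [kc [Hyc Hconn]]]].
  have H21 := Cons r2 f1 c kc Hff1 Hyc Hconn g f2 Hg1 Hy2.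
  have : S r2 f2 by split => //; exists g, f2.
  move/(incl r2 r1) => [_ [c' [kc' [Hyc' Hconn']]]].
  have H12 := Cons r1 f2 c' kc' Hff2 Hyc' Hconn' g f1 Hg2 Hy1.
  exact: conn_antisym (conn_stp_edge H12) (conn_stp_edge H21).
Qed.

End Proof.

Theorem lemma1 (Ag : finType) (Q : Ag -> Type) (Ng : negotiation Ag Q) :
  is_negotiation Ng -> SDAN Ng -> irreducible Ng ->
  forall n : atom Ng, n != nf Ng -> 1 < #|outcome Ng n| ->
  parties Ng n = [set: Ag].
Proof.
move=> Hneg [Hsound [Hdet Hacyc]] Hirr n Hn1 Hn2.
apply/eqP. case: (boolP (parties Ng n == setT)) => // H.
exfalso. exact: (main_contra Hneg Hdet Hacyc Hsound Hirr Hn1 Hn2 H).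
Qed.
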